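(* Let $\Gamma\Rightarrow\Delta$ be a sequent provable in $\mathsf{Grz}_\infty$. Then for every finite set of formulas $\Lambda$, $\mathsf{Grz_{Seq}}\vdash\Lambda^\ast,\Gamma\Rightarrow\Delta$, where $\Lambda^\ast=\{\Box(A\to\Box A)\mid A\in\Lambda\}$.
   Context: Formulas are built from $\bot$ and atomic propositions using $\to$ and $\Box$. A sequent is $\Gamma\Rightarrow\Delta$ with $\Gamma,\Delta$ finite multisets of formulas; $\Box\Pi$ denotes the multiset $\{\Box B:B\in\Pi\}$. Common rules: $(\to_L)$ from $\Gamma,B\Rightarrow\Delta$ and $\Gamma\Rightarrow A,\Delta$ infer $\Gamma,A\to B\Rightarrow\Delta$; $(\to_R)$ from $\Gamma,A\Rightarrow B,\Delta$ infer $\Gamma\Rightarrow A\to B,\Delta$; $(\mathsf{refl})$ from $\Gamma,B,\Box B\Rightarrow\Delta$ infer $\Gamma,\Box B\Rightarrow\Delta$. The finite-proof calculus $\mathsf{Grz_{Seq}}$ has initial sequents $\Gamma,A\Rightarrow A,\Delta$ (any $A$) and $\Gamma,\bot\Rightarrow\Delta$, the rules $(\to_L),(\to_R),(\mathsf{refl})$ and $(\Box_{\mathsf{Grz}})$: from $\Box\Pi,\Box(A\to\Box A)\Rightarrow A$ infer $\Gamma,\Box\Pi\Rightarrow\Box A,\Delta$. The calculus $\mathsf{Grz}_\infty$ has initial sequents $\Gamma,p\Rightarrow p,\Delta$ ($p$ atomic) and $\Gamma,\bot\Rightarrow\Delta$, the rules $(\to_L),(\to_R),(\mathsf{refl})$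 and $(\Box)$: from left premise $\Gamma,\Box\Pi\Rightarrow A,\Delta$ and right premise $\Box\Pi\Rightarrow A$ infer $\Gamma,\Box\Pi\Rightarrow\Box A,\Delta$. Proofs in $\mathsf{Grz}_\infty$ are $\infty$-proofs: possibly infinite trees of sequents built by these rules, with leaves labelled by initial sequents, in which every infinite branch passes through a right premise of $(\Box)$ infinitely often; a sequent is provable if it labels the root of an $\infty$-proof. *)

(* Defs.v *)
From Stdlib Require Import List Permutation.
Import ListNotations.

Inductive form : Type :=
| Bot : form
| Var : nat -> form
| Imp : form -> form -> form
| Box : form -> form.

Definition boxes (Pi : list form) : list form := map Box Pi.

Definition seq_eq (S1 S2 : list form * list form) : Prop :=
  Permutation (fst S1) (fst S2) /\ Permutation (snd S1) (snd S2).

(* ---------- The finite calculus Grz_Seq ----------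
   Conclusions are stated modulo permutation, so derivability is a property
   of multiset sequents. *)
Inductive GrzSeq : list form -> list form -> Prop :=
| gs_init : forall G D A Gm Dl,
    Permutation G (A :: Gm) -> Permutation D (A :: Dl) -> GrzSeq G D
| gs_bot : forall G D Gm,
    Permutation G (Bot :: Gm) -> GrzSeq G D
| gs_impL : forall G D Gm A B,
    Permutation G (Imp A B :: Gm) ->
    GrzSeq (B :: Gm) D -> GrzSeq Gm (A :: D) -> GrzSeq G D
| gs_impR : forall G D Dl A B,
    Permutation D (Imp A B :: Dl) ->
    GrzSeq (A :: G) (B :: Dl) -> GrzSeq G D
| gs_refl : forall G D Gm B,
    Permutation G (Box B :: Gm) ->
    GrzSeq (B :: Box B :: Gm) D -> GrzSeq G D
| gs_boxGrz : forall G D Gm Dl Pi A,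
    Permutation G (Gm ++ boxes Pi) -> Permutation D (Box A :: Dl) ->
    GrzSeq (boxes Pi ++ [Box (Imp A (Box A))]) [A] -> GrzSeq G D.

Inductive rule_tag : Type :=
| RInit | RBot | RImpL | RImpR | RRefl | RBox.

(* Possibly infinite, finitely branching trees whose nodes are labelled by a
   sequent and the rule applied there; the children are the premises, in order
   (for (->_L): first Gamma,B => Delta, then Gamma => A,Delta; for (Box):
   index 0 = left premise, index 1 = right premise). *)
CoInductive ptree : Type :=
| Node : list form -> list form -> rule_tag -> list ptree -> ptree.

Definition pt_seq (t : ptree) : list form * list form :=
  match t with Node G D _ _ => (G, D) end.
Definition pt_rule (t : ptree) : rule_tag :=
  match t with Node _ _ r _ => r end.
Definition pt_kids (t : ptree) : list ptree :=
  match t with Node _ _ _ ks => ks end.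

Fixpoint subtree (t : ptree) (p : list nat) : option ptree :=
  match p with
  | [] => Some t
  | i :: p' =>
      match nth_error (pt_kids t) i with
      | Some t' => subtree t' p'
      | None => None
      end
  end.

Definition locally_correct (t : ptree) : Prop :=
  let '(G, D) := pt_seq t in
  match pt_rule t, pt_kids t with
  | RInit, [] => exists p Gm Dl,
      Permutation G (Var p :: Gm) /\ Permutation D (Var p :: Dl)
  | RBot, [] => exists Gm, Permutation G (Bot :: Gm)
  | RImpL, [k1; k2] => exists Gm A B,
      Permutation G (Imp A B :: Gm) /\
      seq_eq (pt_seq k1) (B :: Gm, D) /\ seq_eq (pt_seq k2) (Gm, A :: D)
  | RImpR, [k] => exists Dl A B,
      Permutation D (Imp A B :: Dl) /\ seq_eq (pt_seq k) (A :: G, B :: Dl)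
  | RRefl, [k] => exists Gm B,
      Permutation G (Box B :: Gm) /\ seq_eq (pt_seq k) (B :: Box B :: Gm, D)
  | RBox, [k1; k2] => exists Gm Dl Pi A,
      Permutation G (Gm ++ boxes Pi) /\ Permutation D (Box A :: Dl) /\
      seq_eq (pt_seq k1) (Gm ++ boxes Pi, A :: Dl) /\
      seq_eq (pt_seq k2) (boxes Pi, [A])
  | _, _ => False
  end.

Definition prefix (d : nat -> nat) (n : nat) : list nat := map d (seq 0 n).

Definition infinite_branch (t : ptree) (d : nat -> nat) : Prop :=
  forall n, subtree t (prefix d n) <> None.

(* Every infinite branch passes through a right premise of (Box) infinitely
   often: infinitely many steps go from a (Box)-node to its child of index 1. *)
Definition fair (t : ptree) : Prop :=
  forall d, infinite_branch t d ->
    forall N, exists n, N <= n /\ d n = 1 /\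
      exists s, subtree t (prefix d n) = Some s /\ pt_rule s = RBox.

Definition inf_proof (t : ptree) : Prop :=
  (forall p s, subtree t p = Some s -> locally_correct s) /\ fair t.

Definition GrzInf_provable (G D : list form) : Prop :=
  exists t, inf_proof t /\ seq_eq (pt_seq t) (G, D).

Definition star (L : list form) : list form :=
  map (fun A => Box (Imp A (Box A))) L.

(* Main.v *)
Require Import Defs.
From Stdlib Require Import List Permutation Lia Classical ClassicalEpsilon.
Import ListNotations.

Lemma perm_mid {X} (l m : list X) x : Permutation (l ++ x :: m) (x :: l ++ m).
Proof. apply Permutation_sym, Permutation_middle. Qed.

Ltac ptr := eapply Permutation_trans; [apply Permutation_sym; eassumption| eassumption].

Lemma gs_perm : forall G D, GrzSeq G D -> forall G' D',
  Permutation G G' -> Permutation D D' -> GrzSeq G' D'.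
Proof.
  induction 1; intros G' D' HG HD.
  - apply gs_init with A Gm Dl; ptr.
  - apply gs_bot with Gm; ptr.
  - apply gs_impL with Gm A B.
    + ptr.
    + apply IHGrzSeq1; auto.
    + apply IHGrzSeq2; auto.
  - apply gs_impR with Dl A B.
    + ptr.
    + apply IHGrzSeq; auto.
  - apply gs_refl with Gm B.
    + ptr.
    + apply IHGrzSeq; auto.
  - apply gs_boxGrz with Gm Dl Pi A; auto;
    ptr.
Qed.

Lemma gs_weakR : forall G D, GrzSeq G D -> forall Y, GrzSeq G (Y :: D).
Proof.
  induction 1; intros Y.
  - eapply gs_init; eauto. eapply Permutation_trans; [apply perm_skip; exact H0| apply perm_swap].
  - eapply gs_bot; eauto.
  - eapply gs_impL; eauto. eapply gs_perm; [apply IHGrzSeq2 with (Y := Y)| auto | apply perm_swap].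
  - eapply gs_impR with (Dl := Y :: Dl).
    + eapply Permutation_trans; [apply perm_skip; exact H| apply perm_swap].
    + eapply gs_perm; [apply IHGrzSeq with (Y := Y)| auto | apply perm_swap].
  - eapply gs_refl; eauto.
  - eapply gs_boxGrz with (Dl := Y :: Dl); eauto.
    eapply Permutation_trans; [apply perm_skip; exact H0| apply perm_swap].
Qed.

Fixpoint subs (f : form) : list form :=
  f :: match f with Imp a b => subs a ++ subs b | Box a => subs a | _ => [] end.

Lemma subs_refl f : In f (subs f).
Proof. destruct f; simpl; auto. Qed.

Lemma subs_trans x y z : In x (subs y) -> In y (subs z) -> In x (subs z).
Proof.
  induction z; simpl; intros H1 H2; destruct H2 as [<-|H2]; auto; try contradiction.
  - apply in_app_or in H2; destruct H2; right; apply in_or_app; auto.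
Qed.

Definition forms (s : ptree) := fst (pt_seq s) ++ snd (pt_seq s).
Definition sub_of (R : list form) f := exists g, In g R /\ In f (subs g).

Lemma sub_of_in R f : In f R -> sub_of R f.
Proof. intros; exists f; split; auto using subs_refl. Qed.
Lemma sub_of_impl R a b : sub_of R (Imp a b) -> sub_of R a.
Proof. intros [g [H1 H2]]; exists g; split; auto. eapply subs_trans; [|exact H2]. simpl; right; apply in_or_app; left; apply subs_refl. Qed.
Lemma sub_of_impr R a b : sub_of R (Imp a b) -> sub_of R b.
Proof. intros [g [H1 H2]]; exists g; split; auto. eapply subs_trans; [|exact H2]. simpl; right; apply in_or_app; right; apply subs_refl. Qed.
Lemma sub_of_box R a : sub_of R (Box a) -> sub_of R a.
Proof. intros [g [H1 H2]]; exists g; split; auto. eapply subs_trans; [|exact H2]. simpl; right; apply subs_refl. Qed.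
Lemma inL {X} (x : X) G D : In x G -> In x (G ++ D). Proof. intros; apply in_or_app; auto. Qed.
Lemma inR {X} (x : X) G D : In x D -> In x (G ++ D). Proof. intros; apply in_or_app; auto. Qed.
Lemma perm_hd {X} (G Gm : list X) x : Permutation G (x :: Gm) -> In x G.
Proof. intros H; eapply Permutation_in; [apply Permutation_sym, H| left; auto]. Qed.
Lemma perm_tl {X} (G Gm : list X) x y : Permutation G (x :: Gm) -> In y Gm -> In y G.
Proof. intros H Hy; eapply Permutation_in; [apply Permutation_sym, H| right; auto]. Qed.
Lemma perm_in' {X} (G G' : list X) y : Permutation G G' -> In y G' -> In y G.
Proof. intros H Hy; eapply Permutation_in; [apply Permutation_sym, H| auto]. Qed.

Lemma seq_eq_forms k G' D' f : seq_eq (pt_seq k) (G', D') -> In f (forms k) -> In f G' \/ In f D'.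
Proof.
  destruct k; unfold seq_eq, forms; simpl; intros [H1 H2] Hf.
  apply in_app_or in Hf; destruct Hf; [left|right]; eapply Permutation_in; eauto.
Qed.

#[local] Hint Resolve sub_of_in sub_of_impl sub_of_impr sub_of_box inL inR perm_hd perm_tl : sub.

Lemma kid_sub t i k : locally_correct t -> nth_error (pt_kids t) i = Some k ->
  forall f, In f (forms k) -> sub_of (forms t) f.
Proof.
  destruct t as [G D r ks]. unfold locally_correct, forms at 2; simpl.
  intros Hlc Hk f Hf.
  destruct r; destruct ks as [|k1 [|k2 [|k3 ks]]]; try contradiction;
  (destruct i as [|[|[|i]]]; simpl in Hk; try discriminate; injection Hk as <-).
  - destruct Hlc as (Gm & A & B & HG & H1 & H2).
    destruct (seq_eq_forms _ _ _ _ H1 Hf) as [[<-|Hf']|Hf']; eauto 8 with sub.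
  - destruct Hlc as (Gm & A & B & HG & H1 & H2).
    destruct (seq_eq_forms _ _ _ _ H2 Hf) as [Hf'|[<-|Hf']]; eauto 8 with sub.
  - destruct Hlc as (Dl & A & B & HD & H1).
    destruct (seq_eq_forms _ _ _ _ H1 Hf) as [[<-|Hf']|[<-|Hf']]; eauto 8 with sub.
  - destruct Hlc as (Gm & B & HG & H1).
    destruct (seq_eq_forms _ _ _ _ H1 Hf) as [[<-|[<-|Hf']]|Hf']; eauto 8 with sub.
  - destruct Hlc as (Gm & Dl & Pi & A & HG & HD & H1 & H2).
    destruct (seq_eq_forms _ _ _ _ H1 Hf) as [Hf'|[<-|Hf']]; eauto 8 with sub.
    apply sub_of_in, inL. eapply perm_in'; eauto.
  - destruct Hlc as (Gm & Dl & Pi & A & HG & HD & H1 & H2).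
    destruct (seq_eq_forms _ _ _ _ H2 Hf) as [Hf'|[<-|[]]]; eauto 8 with sub.
    apply sub_of_in, inL. eapply perm_in'; eauto. apply in_or_app; auto.
Qed.

Lemma subtree_app p q t : subtree t (p ++ q) =
  match subtree t p with Some s => subtree s q | None => None end.
Proof.
  revert t; induction p; intros t; simpl; auto.
  destruct (nth_error (pt_kids t) a); auto.
Qed.

Lemma root_sub p : forall t s, (forall p s, subtree t p = Some s -> locally_correct s) ->
  subtree t p = Some s -> forall f, In f (forms s) -> sub_of (forms t) f.
Proof.
  induction p as [|i p IH]; intros t s Hlc Hs f Hf.
  - simpl in Hs; injection Hs as <-; auto with sub.
  - simpl in Hs. destruct (nth_error (pt_kids t) i) as [k|] eqn:Hk; [|discriminate].
    assert (Hlck : forall p s, subtree k p = Some s -> locally_correct s).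
    { intros q s' Hq. apply (Hlc (i :: q)). simpl; rewrite Hk; auto. }
    destruct (IH k s Hlck Hs f Hf) as [g [Hg Hfg]].
    destruct (kid_sub t i k (Hlc [] t eq_refl) Hk g Hg) as [h [Hh Hgh]].
    exists h; split; auto. eapply subs_trans; eauto.
Qed.

Lemma prefix_add d m k : prefix d (m + k) = prefix d m ++ map d (seq m k).
Proof. unfold prefix. rewrite seq_app, map_app. reflexivity. Qed.

Lemma map_seq_shift (f g : nat -> nat) c n : forall k, (forall j, f (c + j) = g j) ->
  map f (seq (c + k) n) = map g (seq k n).
Proof.
  induction n; intros k H; simpl; auto.
  rewrite H. f_equal. replace (S (c + k)) with (c + S k) by lia. auto.
Qed.

Lemma map_seq_nth (f : nat -> nat) p : (forall j, j < length p -> f j = nth j p 0) ->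
  map f (seq 0 (length p)) = p.
Proof.
  intros H. apply nth_ext with (d := 0) (d' := 0).
  - rewrite length_map, length_seq; auto.
  - intros n Hn. rewrite length_map, length_seq in Hn.
    rewrite nth_indep with (d' := f 0) by (rewrite length_map, length_seq; auto).
    rewrite map_nth, seq_nth by auto. simpl. auto.
Qed.

Lemma subtree_none_app t p q : subtree t (p ++ q) <> None -> subtree t p <> None.
Proof. rewrite subtree_app. destruct (subtree t p); congruence. Qed.

Lemma inf_proof_sub t p s : inf_proof t -> subtree t p = Some s -> inf_proof s.
Proof.
  intros [Hlc Hf] Hs. split.
  - intros q s' Hq. apply (Hlc (p ++ q)). rewrite subtree_app, Hs; auto.
  - intros d Hd N.
    set (d' := fun n => if Nat.ltb n (length p) then nth n p 0 else d (n - length p)).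
    assert (Hpre : forall n, prefix d' (length p + n) = p ++ prefix d n).
    { intros n. rewrite prefix_add. f_equal.
      - unfold prefix. apply map_seq_nth. intros j Hj. unfold d'.
        destruct (PeanoNat.Nat.ltb_spec j (length p)); auto; lia.
      - unfold prefix. rewrite <- (PeanoNat.Nat.add_0_r (length p)) at 1. apply map_seq_shift with (k := 0). intros j. unfold d'.
        destruct (PeanoNat.Nat.ltb_spec (length p + j) (length p)); try lia. f_equal; lia. }
    assert (Hinf : infinite_branch t d').
    { intros n. destruct (PeanoNat.Nat.le_gt_cases (length p) n) as [Hle|Hgt].
      - replace n with (length p + (n - length p)) by lia. rewrite Hpre, subtree_app, Hs. apply Hd.
      - apply (subtree_none_app _ _ (map d' (seq n (length p - n)))).
        rewrite <- prefix_add. replace (n + (length p - n)) with (length p + 0) by lia.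
        rewrite Hpre, subtree_app, Hs. apply Hd. }
    destruct (Hf d' Hinf (length p + N)) as [n [Hn [Hdn [s0 [Hs0 Hr]]]]].
    exists (n - length p). split; [lia|].
    replace n with (length p + (n - length p)) in Hdn, Hs0 by lia.
    split.
    + unfold d' in Hdn. destruct (PeanoNat.Nat.ltb_spec (length p + (n - length p)) (length p)); try lia.
      replace (length p + (n - length p) - length p) with (n - length p) in Hdn by lia. auto.
    + exists s0. rewrite Hpre, subtree_app, Hs in Hs0. auto.
Qed.

Definition formulas_in (S : list form) (t : ptree) :=
  forall p s, subtree t p = Some s -> forall f, In f (forms s) -> In f S.

Lemma formulas_in_sub S t p s : formulas_in S t -> subtree t p = Some s -> formulas_in S s.
Proof. intros H Hs q s' Hq. apply (H (p ++ q)). rewrite subtree_app, Hs; auto. Qed.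

Definition form_eq_dec : forall x y : form, {x = y} + {x <> y}.
Proof. decide equality; apply PeanoNat.Nat.eq_dec. Defined.

Definition nin L x := if in_dec form_eq_dec x L then false else true.
Definition meas S L := length (filter (nin L) S).

Lemma nin_cons A L a : nin (A :: L) a = true -> nin L a = true.
Proof. unfold nin. destruct (in_dec form_eq_dec a (A :: L)) as [H1|H1]; destruct (in_dec form_eq_dec a L) as [H2|H2]; auto.
  intros; exfalso; apply H1; right; auto. Qed.
Lemma nin_A A L : nin (A :: L) A = false.
Proof. unfold nin. destruct (in_dec form_eq_dec A (A :: L)) as [H1|H1]; auto. exfalso; apply H1; left; auto. Qed.
Lemma nin_L A L : ~ In A L -> nin L A = true.
Proof. unfold nin. destruct (in_dec form_eq_dec A L); auto; contradiction. Qed.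

Lemma meas_le S A L : meas S (A :: L) <= meas S L.
Proof.
  unfold meas; induction S; simpl; auto.
  destruct (nin (A :: L) a) eqn:E1.
  - rewrite (nin_cons _ _ _ E1). simpl; lia.
  - destruct (nin L a); simpl; lia.
Qed.

Lemma meas_lt S A L : In A S -> ~ In A L -> meas S (A :: L) < meas S L.
Proof.
  pose proof (meas_le S A L) as Hle; revert Hle.
  unfold meas; induction S; simpl; intros Hle HA HL; [contradiction|].
  destruct HA as [<-|HA].
  - rewrite nin_A, nin_L by auto. simpl.
    pose proof (meas_le S a L); unfold meas in *; lia.
  - destruct (nin (A :: L) a) eqn:E1.
    + rewrite (nin_cons _ _ _ E1) in *. simpl in *.
      pose proof (meas_le S A L); unfold meas in *. specialize (IHS ltac:(lia) HA HL). lia.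
    + pose proof (meas_le S A L); unfold meas in *. specialize (IHS ltac:(lia) HA HL).
      destruct (nin L a); simpl; lia.
Qed.

Definition PL L s := GrzSeq (star L ++ fst (pt_seq s)) (snd (pt_seq s)).
Definition imps L := map (fun A => Imp A (Box A)) L.

Lemma star_boxes L Pi : boxes (imps L ++ Pi) = star L ++ boxes Pi.
Proof. unfold boxes, imps, star. rewrite map_app, map_map. reflexivity. Qed.

Lemma local_step L s : locally_correct s ->
  (forall i k, nth_error (pt_kids s) i = Some k -> ~ (pt_rule s = RBox /\ i = 1) -> PL L k) ->
  (forall k A, pt_rule s = RBox -> nth_error (pt_kids s) 1 = Some k ->
     In A (snd (pt_seq k)) -> ~ In A L -> PL (A :: L) k) ->
  PL L s.
Proof.
  destruct s as [G D r ks]. unfold locally_correct, PL; simpl.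
  intros Hlc Hk Hbox.
  destruct r; destruct ks as [|k1 [|k2 [|k3 ks]]]; try contradiction.
  - destruct Hlc as (p & Gm & Dl & HG & HD).
    apply gs_init with (Var p) (star L ++ Gm) Dl; auto.
    eapply Permutation_trans; [apply Permutation_app_head; exact HG| apply perm_mid].
  - destruct Hlc as (Gm & HG).
    apply gs_bot with (star L ++ Gm).
    eapply Permutation_trans; [apply Permutation_app_head; exact HG| apply perm_mid].
  - destruct Hlc as (Gm & A & B & HG & [H1a H1b] & [H2a H2b]).
    pose proof (Hk 0 k1 eq_refl ltac:(intros [? ?]; discriminate)) as P1.
    pose proof (Hk 1 k2 eq_refl ltac:(intros [? ?]; discriminate)) as P2.
    unfold PL in P1, P2.
    apply gs_impL with (star L ++ Gm) A B.
    + eapply Permutation_trans; [apply Permutation_app_head; exact HG| apply perm_mid].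
    + eapply gs_perm; [exact P1| |exact H1b].
      eapply Permutation_trans; [apply Permutation_app_head; exact H1a| apply perm_mid].
    + eapply gs_perm; [exact P2| |exact H2b].
      apply Permutation_app_head; exact H2a.
  - destruct Hlc as (Dl & A & B & HD & [H1a H1b]).
    pose proof (Hk 0 k1 eq_refl ltac:(intros [? ?]; discriminate)) as P1.
    unfold PL in P1.
    apply gs_impR with Dl A B; auto.
    eapply gs_perm; [exact P1| |exact H1b].
    eapply Permutation_trans; [apply Permutation_app_head; exact H1a| apply perm_mid].
  - destruct Hlc as (Gm & B & HG & [H1a H1b]).
    pose proof (Hk 0 k1 eq_refl ltac:(intros [? ?]; discriminate)) as P1.
    unfold PL in P1.
    apply gs_refl with (star L ++ Gm) B.
    + eapply Permutation_trans; [apply Permutation_app_head; exact HG| apply perm_mid].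
    + eapply gs_perm; [exact P1| |exact H1b].
      eapply Permutation_trans; [apply Permutation_app_head; exact H1a|].
      eapply Permutation_trans; [apply perm_mid|]. apply perm_skip, perm_mid.
  - destruct Hlc as (Gm & Dl & Pi & A & HG & HD & [H1a H1b] & [H2a H2b]).
    destruct (in_dec form_eq_dec A L) as [HA|HA].
    + pose proof (Hk 0 k1 eq_refl ltac:(intros [? ?]; discriminate)) as P1.
      unfold PL in P1.
      destruct (in_split _ _ HA) as (L1 & L2 & ->).
      set (C := Box (Imp A (Box A))).
      set (R := star L1 ++ star L2).
      assert (HS : Permutation (star (L1 ++ A :: L2) ++ G) (C :: R ++ G)).
      { unfold R; rewrite <- app_assoc. unfold star; rewrite map_app; simpl. rewrite <- app_assoc. simpl.
        apply perm_mid. }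
      apply gs_refl with (R ++ G) (Imp A (Box A)); [exact HS|].
      apply gs_impL with (C :: R ++ G) A (Box A); [apply Permutation_refl| |].
      * apply gs_init with (Box A) (C :: R ++ G) Dl; auto.
      * apply gs_weakR with (Y := Box A) in P1.
        eapply gs_perm; [exact P1| |].
        -- eapply Permutation_trans; [|exact HS]. apply Permutation_app_head.
           eapply Permutation_trans; [exact H1a| apply Permutation_sym; exact HG].
        -- eapply Permutation_trans; [apply perm_skip; exact H1b|].
           eapply Permutation_trans; [apply perm_swap|]. apply perm_skip, Permutation_sym, HD.
    + assert (HAk : In A (snd (pt_seq k2))).
      { destruct k2; simpl in *. eapply Permutation_in; [apply Permutation_sym; exact H2b| left; auto]. }
      pose proof (Hbox k2 A eq_refl eq_refl HAk HA) as P2. unfold PL in P2.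
      apply gs_boxGrz with Gm Dl (imps L ++ Pi) A; auto.
      * rewrite star_boxes.
        eapply Permutation_trans; [apply Permutation_app_head; exact HG|].
        rewrite !app_assoc. apply Permutation_app_tail, Permutation_app_comm.
      * rewrite star_boxes.
        eapply gs_perm; [exact P2| |exact H2b].
        simpl. eapply Permutation_trans; [|apply Permutation_cons_append].
        apply perm_skip, Permutation_app_head, H2a.
Qed.

Section Branch.
Variable Bad : ptree -> Prop.
Definition Rk (s : ptree) (i : nat) (k : ptree) :=
  nth_error (pt_kids s) i = Some k /\ Bad k /\ ~ (pt_rule s = RBox /\ i = 1).

Definition nxt (s : ptree) : nat :=
  match excluded_middle_informative (exists i k, Rk s i k) with
  | left H => proj1_sig (constructive_indefinite_description _ H)
  | right _ => 0
  end.

Lemma nxt_spec s : (exists i k, Rk s i k) -> exists k, Rk s (nxt s) k.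
Proof.
  intros H. unfold nxt. destruct (excluded_middle_informative _) as [H'|H']; [|contradiction].
  destruct (constructive_indefinite_description _ H') as [i Hi]. simpl. exact Hi.
Qed.

Fixpoint node (t : ptree) (n : nat) : ptree :=
  match n with
  | 0 => t
  | S n => let s := node t n in
           match nth_error (pt_kids s) (nxt s) with Some k => k | None => s end
  end.

Hypothesis step : forall s, Bad s -> exists i k, Rk s i k.

Lemma branch t : Bad t -> exists d, forall n, exists s,
  subtree t (prefix d n) = Some s /\ ~ (pt_rule s = RBox /\ d n = 1).
Proof.
  intros Ht. exists (fun n => nxt (node t n)).
  assert (Inv : forall n, subtree t (prefix (fun n => nxt (node t n)) n) = Some (node t n) /\ Bad (node t n)).
  { induction n as [|n [IH1 IH2]]; [split; auto|].
    destruct (nxt_spec _ (step _ IH2)) as [k [Hk1 [Hk2 Hk3]]].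
    unfold prefix in *. rewrite seq_S, map_app, subtree_app, IH1. simpl.
    rewrite Hk1. split; auto. }
  intros n. exists (node t n). split; [apply Inv|].
  destruct (nxt_spec _ (step _ (proj2 (Inv n)))) as [k [_ [_ Hk3]]]. exact Hk3.
Qed.
End Branch.

Lemma main S : forall n L, meas S L < n -> forall t, inf_proof t -> formulas_in S t -> PL L t.
Proof.
  induction n as [|n IHn]; intros L Hm t Ht HS; [lia|].
  apply NNPP; intro Hbad.
  set (Bad := fun s => inf_proof s /\ formulas_in S s /\ ~ PL L s).
  assert (step : forall s, Bad s -> exists i k, Rk Bad s i k).
  { intros s [Hs [HSs HPs]]. apply NNPP; intro Hno. apply HPs.
    apply local_step.
    - apply (proj1 Hs [] s eq_refl).
    - intros i k Hk Hr. apply NNPP; intro HPk. apply Hno. exists i, k.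
      split; [auto|split; auto]. unfold Bad.
      assert (Hsub : subtree s [i] = Some k) by (cbn [subtree]; rewrite Hk; auto).
      split; [eapply inf_proof_sub; eauto|split; auto].
      eapply formulas_in_sub; eauto.
    - intros k A Hr Hk HA HAL.
      assert (Hsub : subtree s [1] = Some k) by (cbn [subtree]; rewrite Hk; auto).
      apply IHn.
      + assert (In A S).
        { apply (HSs [1] k Hsub). unfold forms. apply in_or_app; right; auto. }
        pose proof (meas_lt S A L H HAL). lia.
      + eapply inf_proof_sub; eauto.
      + eapply formulas_in_sub; eauto. }
  assert (HBt : Bad t) by (split; [exact Ht|split; assumption]).
  destruct (branch Bad step t HBt) as [d Hd].
  assert (Hinf : infinite_branch t d).
  { intros m. destruct (Hd m) as [s [Hs _]]. congruence. }
  destruct (proj2 Ht d Hinf 0) as [m [_ [Hdn [s [Hs Hr]]]]].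
  destruct (Hd m) as [s' [Hs' Hr']]. rewrite Hs in Hs'. injection Hs' as <-.
  apply Hr'; auto.
Qed.

Theorem lemma3p5 (G D : list form) :
  GrzInf_provable G D ->
  forall L : list form, NoDup L -> GrzSeq (star L ++ G) D.
Proof.
  intros [t [Ht Hseq]] L _.
  set (Sf := flat_map subs (forms t)).
  assert (HS : formulas_in Sf t).
  { intros p s Hs f Hf. apply in_flat_map.
    destruct (root_sub p t s (proj1 Ht) Hs f Hf) as [g [Hg Hfg]]. exists g; auto. }
  pose proof (main Sf (S (meas Sf L)) L (PeanoNat.Nat.lt_succ_diag_r _) t Ht HS) as H.
  unfold PL in H. destruct Hseq as [H1 H2].
  eapply gs_perm; [exact H| apply Permutation_app_head; exact H1| exact H2].
Qed.
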